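(* Let $(X,\cdot)$ be a Rump right quasigroup and let $R: X\times X \to X \times X$, $R(x,y) = (y(x/y),\, x/y)$, with $\nu(x,y) = y(x/y)$ and $\mu(x,y) = x/y$ its two components. Let $(C^{YB}_n(X), \partial^{YB}_n)$ be the set-theoretic Yang-Baxter chain complex of $R$ (defined in the context), and for $n \ge 2$ let $C^D_n(X) \subseteq C^{YB}_n(X)$ be the subgroup spanned by all tuples of the form $(x_1,\ldots,x_{i-1}, x_i x_i, x_i, x_{i+1},\ldots,x_{n-1})$ with $1 \le i \le n-1$ and $x_1,\ldots,x_{n-1}\in X$, and let $C^D_n(X) = 0$ for $n \le 1$. Then $\partial^{YB}_n\bigl(C^D_n(X)\bigr) \subseteq C^D_{n-1}(X)$ for all $n$, i.e. $(C^D_n(X), \partial^{YB}_n)$ is a sub-chain complex of $(C^{YB}_n(X),\partial^{YB}_n)$.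
   Context: A right quasigroup is a magma in which every right translation $y\mapsto yx$ is bijective; $x/y$ denotes the unique $w$ with $wy=x$. A Rump right quasigroup is a right quasigroup with $(zx)(yx)=(zy)(xy)$ for all $x,y,z$. Set-theoretic Yang-Baxter chain complex: $C^{YB}_n(X)$ is the free abelian group on $X^n$ ($n\ge 0$; $X^0$ is a single point). For $1\le i\le n$ define face maps $d^l_{i,n}, d^r_{i,n}: X^n \to X^{n-1}$ (extended linearly) as follows. $d^l_{1,n}$ deletes the first coordinate; for $i\ge 2$, $d^l_{i,n}$ applies $R$ to the coordinates in positions $(i-1,i)$, then to positions $(i-2,i-1)$, ..., then to positions $(2,3)$, and finally replaces the first two coordinates $(a,b)$ by the single coordinate $\mu(a,b)$; i.e. $d^l_{i,n} = (\mu \times \mathrm{Id}^{\times(n-2)})\circ(\mathrm{Id}\times R\times \mathrm{Id}^{\times(n-3)})\circ\cdots\circ(\mathrm{Id}^{\times(i-2)}\times R\times\mathrm{Id}^{\times(n-i)})$. Symmetrically, $d^r_{n,n}$ deletes the last coordinate; for $i \le n-1$, $d^r_{i,n} = (\mathrm{Id}^{\times(n-2)}\times\nu)\circ(\mathrm{Id}^{\times(n-3)}\times R\times\mathrm{Id})\circ\cdots\circ(\mathrm{Id}^{\times(i-1)}\times R\times \mathrm{Id}^{\times(n-i-1)})$, i.e. apply $R$ at positions $(i,i+1)$, then $(i+1,i+2)$, ..., $(n-2,n-1)$, then replace the last two coordinates $(a,b)$ by $\nu(a,b)$. The boundary is $\partial^{YB}_n = \sum_{i=1}^n (-1)^{i+1}(d^l_{i,n}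 - d^r_{i,n})$; it satisfies $\partial^{YB}_{n-1}\circ\partial^{YB}_n = 0$. For example $\partial^{YB}_3(x,y,z) = (y,z) - (y(x/y), z((x/y)/z)) - (x/y,z) + (x, z(y/z)) + (x/(z(y/z)), y/z) - (x,y)$. *)

(* Defs.v *)
From HB Require Import structures.
From mathcomp Require Import all_boot all_order all_algebra.
From mathcomp Require Import freeg.
Set Implicit Arguments. Unset Strict Implicit. Unset Printing Implicit Defensive.
Import GRing.Theory.
Local Open Scope ring_scope.

Section YB.
Variable X : choiceType.
Variables (mul div : X -> X -> X).

Definition nuYB (x y : X) : X := mul y (div x y).
Definition muYB (x y : X) : X := div x y.

(* apply R to the coordinates at 0-indexed positions (k, k+1) *)
Definition applyR (k : nat) (t : seq X) : seq X :=
  match drop k t with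
  | a :: b :: r => take k t ++ nuYB a b :: muYB a b :: r
  | _ => t
  end.

(* d^l_{i,n}, with n = size t, 1 <= i <= n (1-indexed i) *)
Definition dl (i : nat) (t : seq X) : seq X :=
  if i == 1%N then behead t
  else
    (* R at 1-indexed positions (i-1,i), (i-2,i-1), ..., (2,3),
       i.e. 0-indexed k = i-2, i-3, ..., 1 *)
    let s := foldl (fun s k => applyR k s) t (rev (iota 1 (i - 2))) in
    match s with
    | a :: b :: r => muYB a b :: r
    | _ => s
    end.

(* d^r_{i,n}, with n = size t, 1 <= i <= n *)
Definition dr (i : nat) (t : seq X) : seq X :=
  let n := size t in
  if i == n then take (n - 1) t
  else
    (* R at 1-indexed positions (i,i+1), ..., (n-2,n-1),
       i.e. 0-indexed k = i-1, ..., n-3 *)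
    let s := foldl (fun s k => applyR k s) t (iota (i - 1) (n - 1 - i)) in
    let m := size s in
    match drop (m - 2) s with
    | [:: a; b] => take (m - 2) s ++ [:: nuYB a b]
    | _ => s
    end.

(* chains: the free abelian group on X^* = disjoint union of the X^n;
   C^{YB}_n(X) is the subgroup of chains supported on tuples of size n. *)
Definition chain := {freeg (seq X) / int}.

Definition bdYB_gen (t : seq X) : chain :=
  \sum_(1 <= i < (size t).+1)
     ((-1) ^+ i.+1 : int) *: (<< dl i t >> - << dr i t >>).

(* linear extension: on C_n this is \partial^{YB}_n *)
Definition bdYB (c : chain) : chain := fglift bdYB_gen c.

(* degenerate generator (x_1,...,x_{i-1}, x_i x_i, x_i, x_{i+1},...,x_{n-1})
   encoded as (pre, x_i, post) with pre = (x_1..x_{i-1}) *)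
Definition degen_gen (g : seq X * X * seq X) : seq X :=
  g.1.1 ++ mul g.1.2 g.1.2 :: g.1.2 :: g.2.

(* c lies in C^D_n(X): c is a Z-linear combination of degenerate generators
   of length n, i.e. with 1 <= i <= n-1 (size pre + size post + 2 = n).
   For n <= 1 there are no such generators, so C^D_n = 0. *)
Definition inCD (n : nat) (c : chain) : Prop :=
  exists s : seq (int * (seq X * X * seq X)),
    all (fun e => (size e.2.1.1 + size e.2.2).+2 == n) s /\
    c = \sum_(e <- s) e.1 *: << degen_gen e.2 >>.

End YB.

Definition rump_right_quasigroup (X : Type) (mul div : X -> X -> X) : Prop :=
  (forall x : X, bijective (fun y => mul y x)) /\
  (forall x y : X, mul (div x y) y = x) /\
  (forall x y z : X, mul (mul z x) (mul y x) = mul (mul z y) (mul x y)).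

(* Main.v *)
Require Import Defs.
From HB Require Import structures.
From mathcomp Require Import all_boot all_order all_algebra.
From mathcomp Require Import freeg zify.
Set Implicit Arguments. Unset Strict Implicit. Unset Printing Implicit Defensive.
Import GRing.Theory.

Fixpoint TL (X : choiceType) (mul div : X -> X -> X) (mid : seq X) (y : X)
  : X * seq X :=
  match mid with
  | [::] => (y, [::])
  | m :: ms => let q := TL mul div ms y in
               (nuYB mul div m q.1, muYB div m q.1 :: q.2)
  end.

Fixpoint TR (X : choiceType) (mul div : X -> X -> X) (w : X) (mid : seq X)
  : seq X * X :=
  match mid with
  | [::] => ([::], w)
  | m :: ms => let q := TR mul div (muYB div w m) ms in
               (nuYB mul div w m :: q.1, q.2)
  end.

Lemma size_TL (X : choiceType) (mul div : X -> X -> X) mid y :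
  size (TL mul div mid y).2 = size mid.
Proof. by elim: mid => //= m ms ->. Qed.

Lemma size_TR (X : choiceType) (mul div : X -> X -> X) mid w :
  size (TR mul div w mid).1 = size mid.
Proof. by elim: mid w => //= m ms IH w; rewrite IH. Qed.

Lemma TL_cat (X : choiceType) (mul div : X -> X -> X) a b y :
  TL mul div (a ++ b) y =
  ((TL mul div a (TL mul div b y).1).1,
   (TL mul div a (TL mul div b y).1).2 ++ (TL mul div b y).2).
Proof.
elim: a => [|m ms IH] /=; first by case: (TL mul div b y).
by rewrite IH.
Qed.

Lemma TR_cat (X : choiceType) (mul div : X -> X -> X) a b w :
  TR mul div w (a ++ b) =
  ((TR mul div w a).1 ++ (TR mul div (TR mul div w a).2 b).1,
   (TR mul div (TR mul div w a).2 b).2).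
Proof.
elim: a w => [|m ms IH] w /=; first by case: (TR mul div w b).
by rewrite IH.
Qed.

Lemma applyR_cat (X : choiceType) (mul div : X -> X -> X) pre a b r :
  applyR mul div (size pre) (pre ++ a :: b :: r) =
  pre ++ nuYB mul div a b :: muYB div a b :: r.
Proof. by rewrite /applyR drop_size_cat // take_size_cat. Qed.

Lemma foldL (X : choiceType) (mul div : X -> X -> X) mid pre y rest :
  foldl (fun s k => applyR mul div k s) (pre ++ mid ++ y :: rest)
        (rev (iota (size pre) (size mid))) =
  pre ++ (TL mul div mid y).1 :: (TL mul div mid y).2 ++ rest.
Proof.
elim: mid pre => [|m ms IH] pre //=.
rewrite rev_cons foldl_rcons -cat_rcons.
have := IH (rcons pre m); rewrite size_rcons => ->.
by rewrite cat_rcons applyR_cat.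
Qed.

Lemma foldR (X : choiceType) (mul div : X -> X -> X) mid pre w rest :
  foldl (fun s k => applyR mul div k s) (pre ++ w :: mid ++ rest)
        (iota (size pre) (size mid)) =
  pre ++ (TR mul div w mid).1 ++ (TR mul div w mid).2 :: rest.
Proof.
elim: mid pre w => [|m ms IH] pre w //=.
rewrite applyR_cat -cat_rcons.
by have := IH (rcons pre (nuYB mul div w m)); rewrite size_rcons => ->; rewrite cat_rcons.
Qed.

Lemma dl_eq (X : choiceType) (mul div : X -> X -> X) m y rest :
  dl mul div (size m).+1 (m ++ y :: rest) = (TL mul div m y).2 ++ rest.
Proof.
case: m => [|x0 mid] //=.
rewrite /dl /=.
rewrite subn2 /=.
by have := foldL mul div mid [:: x0] y rest => /= ->.
Qed.

Lemma dr_eq (X : choiceType) (mul div : X -> X -> X) pre w m :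
  dr mul div (size pre).+1 (pre ++ w :: m) = pre ++ (TR mul div w m).1.
Proof.
rewrite /dr size_cat /=.
case/lastP: m => [|mid z].
  by rewrite addn1 eqxx /= subn1 /= take_size_cat // cats0.
rewrite size_rcons addnS eqSS -{1}(addn0 (size pre)) eqn_add2l /=.
have -> : (size pre + (size mid).+1).+1 - 1 - (size pre).+1 = size mid by lia.
rewrite subn1 /= -cats1 foldR.
have -> : pre ++ (TR mul div w mid).1 ++ [:: (TR mul div w mid).2, z & [::]]
   = (pre ++ (TR mul div w mid).1) ++ [:: (TR mul div w mid).2; z] by rewrite catA.
rewrite size_cat /= addn2 subn2 /= drop_size_cat ?take_size_cat ?size_cat ?size_TR //.
by rewrite TR_cat /= -catA.
Qed.

Lemma split_at (T : Type) (s : seq T) j : j < size s ->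
  exists m y r, s = m ++ y :: r /\ size m = j.
Proof.
move=> hj; case E: (drop j s) => [|y r].
  by move: E => /(congr1 size); rewrite size_drop /=; lia.
exists (take j s), y, r; split; first by rewrite -E cat_take_drop.
by rewrite size_take hj.
Qed.


Lemma mul_inj (X : choiceType) (mul div : X -> X -> X) :
  rump_right_quasigroup mul div -> forall (x : X) (a b : X), mul a x = mul b x -> a = b.
Proof. by case=> hb _ x a b; exact: (bij_inj (hb x)). Qed.

Lemma muxx (X : choiceType) (mul div : X -> X -> X) :
  rump_right_quasigroup mul div -> forall x, muYB div (mul x x) x = x.
Proof.
move=> H x; apply: (@mul_inj _ _ _ H x); rewrite /muYB; by case: H => _ [-> _].
Qed.

Lemma nuxx (X : choiceType) (mul div : X -> X -> X) :
  rump_right_quasigroup mul div -> forall x, nuYB mul div (mul x x) x = mul x x.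
Proof. by move=> H x; rewrite /nuYB -/(muYB div _ _) muxx. Qed.

Lemma L_id (X : choiceType) (mul div : X -> X -> X) :
  rump_right_quasigroup mul div -> forall x y,
  muYB div (mul x x) (nuYB mul div x y) = mul (muYB div x y) (muYB div x y).
Proof.
move=> H x y; apply: (@mul_inj _ _ _ H (nuYB mul div x y)).
rewrite /muYB /nuYB.
case: H => _ [hd hr]; rewrite hd.
by rewrite hr hd.
Qed.

Lemma R_id (X : choiceType) (mul div : X -> X -> X) :
  rump_right_quasigroup mul div -> forall u x,
  nuYB mul div u (mul x x) =
  mul (nuYB mul div (muYB div u (mul x x)) x) (nuYB mul div (muYB div u (mul x x)) x).
Proof.
move=> H u x; rewrite /muYB /nuYB.
case: H => _ [hd hr].
set v := div u (mul x x).
by rewrite -{1}(hd v x) hr.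
Qed.

Definition isDeg (X : choiceType) (mul : X -> X -> X) (m : nat) (u : seq X) :=
  exists g : seq X * X * seq X, (size g.1.1 + size g.2).+2 = m /\ u = degen_gen mul g.

Lemma dl_pair (X : choiceType) (mul div : X -> X -> X) :
  rump_right_quasigroup mul div -> forall pre x post,
  dl mul div (size pre).+1 (degen_gen mul (pre, x, post)) =
  dl mul div (size pre).+2 (degen_gen mul (pre, x, post)).
Proof.
move=> H pre x post; rewrite /degen_gen /= dl_eq.
have -> : pre ++ mul x x :: x :: post = (pre ++ [:: mul x x]) ++ x :: post by rewrite -catA.
have -> : (size pre).+2 = (size (pre ++ [:: mul x x])).+1 by rewrite size_cat addn1.
by rewrite dl_eq TL_cat /= nuxx // muxx // -catA.
Qed.

Lemma dr_pair (X : choiceType) (mul div : X -> X -> X) :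
  rump_right_quasigroup mul div -> forall pre x post,
  dr mul div (size pre).+1 (degen_gen mul (pre, x, post)) =
  dr mul div (size pre).+2 (degen_gen mul (pre, x, post)).
Proof.
move=> H pre x post; rewrite /degen_gen /= dr_eq.
have -> : pre ++ mul x x :: x :: post = (pre ++ [:: mul x x]) ++ x :: post by rewrite -catA.
have -> : (size pre).+2 = (size (pre ++ [:: mul x x])).+1 by rewrite size_cat addn1.
by rewrite dr_eq /= nuxx // muxx // -catA.
Qed.

Lemma dl_deg (X : choiceType) (mul div : X -> X -> X) :
  rump_right_quasigroup mul div -> forall pre x post j,
  j < (size pre + size post).+2 -> j != size pre -> j != (size pre).+1 ->
  isDeg mul (size pre + size post).+1 (dl mul div j.+1 (degen_gen mul (pre, x, post))).
Proof.
move=> H pre x post j hj h1 h2; rewrite /degen_gen /=.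
case: (ltnP j (size pre)) => hjp.
  have [m [y [r [-> hm]]]] := split_at hjp.
  rewrite -catA /= -hm dl_eq.
  exists ((TL mul div m y).2 ++ r, x, post); split.
    by rewrite /= size_cat size_TL size_cat /=; lia.
  by rewrite /degen_gen /= catA.
have hq : j - (size pre).+2 < size post by lia.
have [q [y [r [hpost hq']]]] := split_at hq.
rewrite hpost.
have -> : pre ++ mul x x :: x :: q ++ y :: r = (pre ++ mul x x :: x :: q) ++ y :: r
  by rewrite -catA.
have -> : j = size (pre ++ mul x x :: x :: q) by rewrite size_cat /=; lia.
rewrite dl_eq TL_cat /= L_id //.
exists ((TL mul div pre (nuYB mul div (mul x x) (nuYB mul div x (TL mul div q y).1))).2,
        muYB div x (TL mul div q y).1, (TL mul div q y).2 ++ r); split.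
  by rewrite /= size_cat !size_TL size_cat /=; lia.
by rewrite /degen_gen /= -catA.
Qed.

Lemma dr_deg (X : choiceType) (mul div : X -> X -> X) :
  rump_right_quasigroup mul div -> forall pre x post j,
  j < (size pre + size post).+2 -> j != size pre -> j != (size pre).+1 ->
  isDeg mul (size pre + size post).+1 (dr mul div j.+1 (degen_gen mul (pre, x, post))).
Proof.
move=> H pre x post j hj h1 h2; rewrite /degen_gen /=.
case: (ltnP j (size pre)) => hjp.
  have [m [w [r [-> hm]]]] := split_at hjp.
  rewrite -catA /= -hm dr_eq TR_cat /= R_id //.
  set u := (TR mul div w r).2.
  exists (m ++ (TR mul div w r).1, nuYB mul div (muYB div u (mul x x)) x,
          (TR mul div (muYB div (muYB div u (mul x x)) x) post).1); split.
    rewrite /= !size_cat !size_TR ?size_cat /=; lia.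
  by rewrite /degen_gen /= -catA.
have hq : j - (size pre).+2 < size post by lia.
have [q [w [r [hpost hq']]]] := split_at hq.
rewrite hpost.
have -> : pre ++ mul x x :: x :: q ++ w :: r = (pre ++ mul x x :: x :: q) ++ w :: r
  by rewrite -catA.
have -> : j = size (pre ++ mul x x :: x :: q) by rewrite size_cat /=; lia.
rewrite dr_eq.
exists (pre, x, q ++ (TR mul div w r).1); split.
  by rewrite /= size_cat !size_TR size_cat /=; lia.
by rewrite /degen_gen /= -catA.
Qed.
Local Open Scope ring_scope.

Lemma bdB (X : choiceType) (mul div : X -> X -> X) (a b : chain X) :
  bdYB mul div (a - b) = bdYB mul div a - bdYB mul div b.
Proof. exact: lift_is_additive. Qed.

Lemma bd0 (X : choiceType) (mul div : X -> X -> X) : bdYB mul div 0 = 0.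
Proof. by have := bdB mul div 0 0; rewrite subrr => ->; rewrite subrr. Qed.

Lemma bdD (X : choiceType) (mul div : X -> X -> X) (a b : chain X) :
  bdYB mul div (a + b) = bdYB mul div a + bdYB mul div b.
Proof.
have hN c : bdYB mul div (- c) = - bdYB mul div c by rewrite -[- c]sub0r bdB bd0 sub0r.
by rewrite -[b in LHS]opprK (bdB mul div a (- b)) hN opprK.

Qed.

Lemma bdZU (X : choiceType) (mul div : X -> X -> X) (k : int) (t : seq X) :
  bdYB mul div (k *: << t >>) = k *: bdYB_gen mul div t.
Proof.
rewrite -[k in k *: _]intz scaler_int freeg_mulz /bdYB liftU.
by rewrite intz.
Qed.

Lemma inCD0 (X : choiceType) (mul : X -> X -> X) m : inCD mul m 0.
Proof. by exists [::]; rewrite big_nil. Qed.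

Lemma inCDD (X : choiceType) (mul : X -> X -> X) m a b :
  inCD mul m a -> inCD mul m b -> inCD mul m (a + b).
Proof.
move=> [s [hs ->]] [s' [hs' ->]]; exists (s ++ s'); split.
  by rewrite all_cat hs hs'.
by rewrite big_cat.
Qed.

Lemma inCDZ (X : choiceType) (mul : X -> X -> X) m (k : int) a :
  inCD mul m a -> inCD mul m (k *: a).
Proof.
move=> [s [hs ->]]; exists [seq (k * e.1, e.2) | e <- s]; split.
  by rewrite all_map.
rewrite big_map scaler_sumr; apply: eq_bigr => e _ /=.
by rewrite scalerA.
Qed.

Lemma inCDB (X : choiceType) (mul : X -> X -> X) m a b :
  inCD mul m a -> inCD mul m b -> inCD mul m (a - b).
Proof.
move=> ha hb; apply: inCDD => //.
by rewrite -scaleN1r; apply: inCDZ.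
Qed.

Lemma inCDU (X : choiceType) (mul : X -> X -> X) m u :
  isDeg mul m u -> inCD mul m << u >>.
Proof.
move=> [g [hg ->]]; exists [:: (1, g)]; split.
  by rewrite /= hg eqxx.
by rewrite big_seq1 scale1r.
Qed.
Local Open Scope ring_scope.

Lemma gen_in (X : choiceType) (mul div : X -> X -> X) :
  rump_right_quasigroup mul div -> forall pre x post,
  inCD mul (size pre + size post).+1
    (bdYB_gen mul div (degen_gen mul (pre, x, post))).
Proof.
move=> H pre x post.
set t := degen_gen mul (pre, x, post).
have hn : size t = (size pre + size post).+2 by rewrite /t /degen_gen size_cat /=; lia.
rewrite /bdYB_gen hn.
pose F := fun i : nat => (((-1) ^+ i.+1 : int) *: (<< dl mul div i t >> - << dr mul div i t >>) : chain X).
change (inCD mul (size pre + size post).+1 (\sum_(1 <= i < (size pre + size post).+3) F i)).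
have hgood : forall j, (j < (size pre + size post).+2)%N -> j != size pre ->
    j != (size pre).+1 -> inCD mul (size pre + size post).+1 (F j.+1).
  move=> j hj h1 h2; rewrite /F; apply: inCDZ; apply: inCDB; apply: inCDU.
    exact: dl_deg.
  exact: dr_deg.
rewrite (@big_cat_nat _ _ _ (size pre).+1); [|lia|lia].
rewrite (@big_cat_nat _ _ _ (size pre).+3 (size pre).+1); [|lia|lia].
have -> : \sum_((size pre).+1 <= i < (size pre).+3) F i = F (size pre).+1 + F (size pre).+2.
  by rewrite (@big_ltn _ _ _ (size pre).+1 (size pre).+3) // big_nat1.
have -> : F (size pre).+1 + F (size pre).+2 = 0.
  rewrite /F /t dl_pair // dr_pair // (exprS _ (size pre).+2) mulN1r scaleNr.
  by rewrite addrN.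
apply: inCDD.
  rewrite big_nat_cond; apply: big_ind; [exact: inCD0 | exact: inCDD |].
  move=> i /andP [/andP [hi1 hi2] _].
  case: i hi1 hi2 => [|j] // _ hj.
  apply: hgood; lia.
apply: inCDD; first exact: inCD0.
rewrite big_nat_cond; apply: big_ind; [exact: inCD0 | exact: inCDD |].
move=> i /andP [/andP [hi1 hi2] _].
case: i hi1 hi2 => [|j] // hj1 hj2.
apply: hgood; lia.
Qed.

Theorem mainTheorem3 (X : choiceType) (mul div : X -> X -> X) :
  rump_right_quasigroup mul div ->
  forall (n : nat) (c : chain X),
    inCD mul n c -> inCD mul n.-1 (bdYB mul div c).
Proof.
move=> H n c [s [hs ->]].
elim: s hs => [|e s IH] /=.
  by move=> _; rewrite big_nil bd0; exact: inCD0.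
move=> /andP [he hs].
rewrite big_cons bdD; apply: inCDD; last exact: IH.
rewrite bdZU; apply: inCDZ.
case: e he => k [[pre x] post] /= /eqP <-.
exact: gen_in.
Qed.
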